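(* Let $\mathcal X$ be finite with $N=|\mathcal X|\ge2$, $c\in(0,1/N]$, $\varepsilon\ge0$, and let $K\in\mathcal M(\varepsilon,c)$. Then for all $P_X,Q_X\in\mathcal Q_{\mathcal X}(c)$ with $\mathrm{TV}(P_X\|Q_X)\le\delta$, $$D(K\circ P_X\|K\circ Q_X)\le\Xi(\varepsilon,c)\,\log\big((1-Nc)e^\varepsilon+1\big)\,\delta,$$ where $\Xi(\varepsilon,c)=\min\left\{\frac{e^\varepsilon-1}{e^\varepsilon(1-Nc)+1},1\right\}$.
   Context: $D(P\|Q)=\sum_y P(y)\log\frac{P(y)}{Q(y)}$ is relative entropy (natural log) and $\mathrm{TV}(P\|Q)=\frac12\sum|P-Q|$. A kernel $K$ is a row-stochastic matrix with entries $K_{Y|X=x}(y)$, $(K\circ P_X)(y)=\sum_xK_{Y|X=x}(y)P_X(x)$. PML: $\ell_{K\times P_X}(X\to y)=\log\frac{\max_x K_{Y|X=x}(y)}{(K\circ P_X)(y)}$ for full-support $P_X$ and $(K\circ P_X)(y)>0$. $\mathcal Q_{\mathcal X}(c)=\{P_X:\min_xP_X(x)\ge c\}$; $C(K,\mathcal P)=\sup_{P_X\in\mathcal P}\sup_{y:(K\circ P_X)(y)>0}\ell_{K\times P_X}(X\to y)$; $\mathcal M(\varepsilon,c)$ is the set of kernels from $\mathcal X$ to a finite output set with $C(K,\mathcal Q_{\mathcal X}(c))\le\varepsilon$. *)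

(* Defs.v *)
From HB Require Import structures.
From mathcomp Require Import all_boot all_order all_algebra.
From mathcomp Require Import reals sequences exp.
Set Implicit Arguments. Unset Strict Implicit. Unset Printing Implicit Defensive.
Import Order.TTheory GRing.Theory Num.Theory.
Local Open Scope ring_scope.

Section Defs.
Variable R : realType.

Definition is_distr (T : finType) (P : T -> R) : Prop :=
  (forall t, 0 <= P t) /\ \sum_t P t = 1.

(* row-stochastic kernel: K x y = K_{Y|X=x}(y) *)
Definition is_kernel (X Y : finType) (K : X -> Y -> R) : Prop :=
  forall x, is_distr (K x).

Definition push (X Y : finType) (K : X -> Y -> R) (P : X -> R) : Y -> R :=
  fun y => \sum_x K x y * P x.

Definition KL (T : finType) (P Q : T -> R) : R :=
  \sum_(t | P t != 0) P t * ln (P t / Q t).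

Definition TV (T : finType) (P Q : T -> R) : R :=
  2^-1 * \sum_t `|P t - Q t|.

Definition PML (X Y : finType) (K : X -> Y -> R) (P : X -> R) (y : Y) : R :=
  ln ((\big[Num.max/0]_x K x y) / push K P y).

Definition Qc (X : finType) (c : R) (P : X -> R) : Prop :=
  is_distr P /\ forall x, c <= P x.

(* C(K, Q_X(c)) <= eps, i.e. the supremum is bounded by eps *)
Definition C_le (X Y : finType) (K : X -> Y -> R) (c eps : R) : Prop :=
  forall P : X -> R, Qc c P ->
  forall y, 0 < push K P y -> PML K P y <= eps.

Definition in_M (X Y : finType) (eps c : R) (K : X -> Y -> R) : Prop :=
  is_kernel K /\ C_le K c eps.

Definition Xi (X : finType) (eps c : R) : R :=
  Num.min ((expR eps - 1) / (expR eps * (1 - #|X|%:R * c) + 1)) 1.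

End Defs.

(* Main.v *)
Require Import Defs.
From HB Require Import structures.
From mathcomp Require Import all_boot all_order all_algebra.
From mathcomp Require Import reals sequences exp.
From mathcomp Require Import ring lra.
Import Order.TTheory GRing.Theory Num.Theory.
Local Open Scope ring_scope.







Section A.
Variable R : realType.

Lemma tangent (s t : R) : 0 < s -> 0 < t ->
  t * ln t + (ln t + 1) * (s - t) <= s * ln s.
Proof.
move=> s0 t0.
have h : ln (t / s) <= t / s - 1.
  have := @le_ln1Dx R (t / s - 1).
  rewrite [1 + _]addrC subrK; apply.
  have : 0 < t / s by rewrite divr_gt0. lra.
rewrite ln_div ?posrE // in h.
have h2 : s * (ln t - ln s) <= s * (t / s - 1) by rewrite ler_pM2l.
have h3 : s * (t / s) = t by rewrite mulrCA divff ?gt_eqF // mulr1.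
nra.
Qed.

Lemma chord (x t y : R) : 0 < x -> x <= t -> t <= y ->
  (y - x) * (t * ln t) <= (y - t) * (x * ln x) + (t - x) * (y * ln y).
Proof.
move=> x0 xt ty.
have t0 : 0 < t by apply: lt_le_trans xt.
have y0 : 0 < y by apply: lt_le_trans ty.
have h1 := @tangent x t x0 t0.
have h2 := @tangent y t y0 t0.
have a1 : 0 <= y - t by rewrite subr_ge0.
have a2 : 0 <= t - x by rewrite subr_ge0.
have e1 := ler_wpM2l a1 h1.
have e2 := ler_wpM2l a2 h2.
nra.
Qed.

Definition pp (r : R) := (r + `|r|) / 2.
Lemma pp_pos r : 0 <= r -> pp r = r.
Proof. by move=> h; rewrite /pp ger0_norm //; lra. Qed.
Lemma pp_neg r : r <= 0 -> pp r = 0.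
Proof. by move=> h; rewrite /pp ler0_norm // subrr mul0r. Qed.
Lemma pp_ge0 r : 0 <= pp r.
Proof. by case: (lerP 0 r) => h; [rewrite pp_pos | rewrite pp_neg // ltW]. Qed.
Lemma pp_ge r : r <= pp r.
Proof. by case: (lerP 0 r) => h; [rewrite pp_pos | rewrite pp_neg // ltW]. Qed.

Lemma term (p q b : R) : 0 <= p -> 0 <= q -> 1 <= b -> p <= b * q -> q <= b * p ->
  (b - 1) * (if p != 0 then p * ln (p / q) else 0)
   <= (p - q) * ln b + (b - 1) * ln b * pp (p - q).
Proof.
move=> p0 q0 b1 pq qp.
have lb : 0 <= ln b by rewrite ln_ge0.
have b0 : 0 < b by apply: lt_le_trans b1.
case: (eqVneq p 0) => [p00|pn0].
  have q00 : q = 0 by move: qp; rewrite p00 mulr0 => h; apply/le_anti; rewrite h q0.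
  by rewrite p00 q00 /= subrr pp_pos // !(mulr0, mul0r) addr0.
have pp0 : 0 < p by rewrite lt_def pn0.
have qq0 : 0 < q.
  by rewrite -(pmulr_rgt0 _ b0); apply: lt_le_trans pp0 pq.
set t := p / q.
have hp : p = t * q by rewrite /t mulfVK // gt_eqF.
have t0 : 0 < t by rewrite divr_gt0.
case: (lerP q p) => hqp.
  have t1 : 1 <= t by rewrite /t ler_pdivlMr // mul1r.
  have tb : t <= b by rewrite /t ler_pdivrMr.
  have h := @chord 1 t b ltr01 t1 tb.
  rewrite ln1 mulr0 mulr0 add0r in h.
  rewrite pp_pos ?subr_ge0 //.
  have e : (b - 1) * (p * ln t) = q * ((b - 1) * (t * ln t)) by rewrite hp; ring.
  rewrite e.
  have := ler_wpM2l q0 h.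
  have e2 : q * ((t - 1) * (b * ln b)) = (p - q) * ln b + (b - 1) * ln b * (p - q).
    by rewrite hp; ring.
  by rewrite e2.
have t1 : t <= 1 by rewrite /t ler_pdivrMr // mul1r ltW.
have bi0 : 0 < b^-1 by rewrite invr_gt0.
have tb : b^-1 <= t.
  by rewrite /t ler_pdivlMr // mulrC ler_pdivrMr // mulrC.
have h := @chord b^-1 t 1 bi0 tb t1.
rewrite ln1 mulr0 mulr0 addr0 lnV ?posrE // in h.
rewrite pp_neg; last by rewrite subr_le0 ltW.
rewrite mulr0 addr0 /=.
have hb : b * b^-1 = 1 by rewrite divff // gt_eqF.
have := ler_wpM2l (ltW (mulr_gt0 b0 qq0)) h.
have e : b * q * ((1 - b^-1) * (t * ln t)) = (b - 1) * (p * ln t).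
  by rewrite hp; field; rewrite gt_eqF.
rewrite e.
have e2 : b * q * ((1 - t) * (b^-1 * - ln b)) = (p - q) * ln b.
  by rewrite hp; field; rewrite gt_eqF.
by rewrite e2.
Qed.
End A.
Arguments pp {R}.
Section B.
Variables (R : realType) (X Y : finType) (c eps : R) (K : X -> Y -> R).
Hypothesis c0 : 0 < c.
Hypothesis HK : in_M eps c K.

Lemma K_ge0 x y : 0 <= K x y.
Proof. by case: HK => hk _; case: (hk x) => h _; apply: h. Qed.

Lemma K_sum1 x : \sum_y K x y = 1.
Proof. by case: HK => hk _; case: (hk x). Qed.

Lemma push_ge0 (P : X -> R) y : (forall x, 0 <= P x) -> 0 <= push K P y.
Proof. by move=> hP; apply: sumr_ge0 => x _; apply: mulr_ge0 => //; apply: K_ge0. Qed.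

Lemma keyB (P : X -> R) z y : Qc c P -> K z y <= expR eps * push K P y.
Proof.
move=> [[hP0 hP1] hPc].
have pg := @push_ge0 P y hP0.
have single : K z y * P z <= push K P y.
  rewrite /push (bigD1 z) //= lerDl; apply: sumr_ge0 => x _.
  by apply: mulr_ge0 => //; apply: K_ge0.
case: (ltrP 0 (push K P y)) => hpos; last first.
  have p0 : push K P y = 0 by apply/le_anti; rewrite hpos pg.
  rewrite p0 mulr0.
  have : K z y * P z <= 0 by rewrite -p0.
  rewrite pmulr_lle0 //; apply: lt_le_trans c0 (hPc z).
case: HK => _ hC.
have hl := hC P (conj (conj hP0 hP1) hPc) y hpos.
rewrite /PML in hl.
set M := \big[Num.max/0]_x K x y in hl.
have hzM : K z y <= M by rewrite /M; apply: (le_bigmax 0 (fun x => K x y) z).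
case: (ltrP 0 M) => hM; last first.
  by apply: le_trans hzM (le_trans hM _); apply: mulr_ge0 => //; apply: expR_ge0.
have hr : 0 < M / push K P y by rewrite divr_gt0.
have : expR (ln (M / push K P y)) <= expR eps by rewrite ler_expR.
rewrite lnK ?posrE // ler_pdivrMr // mulrC => h.
exact: le_trans hzM h.
Qed.

Hypothesis hcN : #|X|%:R * c <= 1.
Hypothesis eps0 : 0 <= eps.
Let k := 1 - #|X|%:R * c.
Let e := expR eps.

Lemma k_ge0 : 0 <= k.
Proof. by rewrite /k subr_ge0. Qed.

Lemma sum_minus_c (P : X -> R) : Qc c P -> \sum_x (P x - c) = k.
Proof.
move=> [[_ h1] _]; rewrite sumrB h1 sumr_const /k mulr_natl.
by [].
Qed.

Lemma ratio (P Q : X -> R) y : Qc c P -> Qc c Q ->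
  push K P y <= (1 + e * k) * push K Q y.
Proof.
move=> hP hQ.
have e1 : push K P y = \sum_x K x y * (P x - c) + \sum_x K x y * c.
  by rewrite /push -big_split /=; apply: eq_bigr => x _; ring.
have s1 : \sum_x K x y * (P x - c) <= \sum_x (e * push K Q y) * (P x - c).
  apply: ler_sum => x _; apply: ler_wpM2r; last exact: keyB.
  by rewrite subr_ge0; case: hP => _; apply.
have s2 : \sum_x K x y * c <= push K Q y.
  apply: ler_sum => x _; apply: ler_wpM2l; first exact: K_ge0.
  by case: hQ => _; apply.
rewrite -mulr_sumr sum_minus_c // in s1.
rewrite e1; lra.
Qed.

Definition P0 (x' : X) : X -> R := fun z => c + k * (z == x')%:R.

Lemma P0_Qc x' : Qc c (P0 x').
Proof.
have hk := k_ge0.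
have hz : forall z, c <= P0 x' z.
  by move=> z; rewrite /P0 lerDl; apply: mulr_ge0 => //; case: (z == x').
split; last exact: hz.
split; first by move=> z; apply: le_trans (hz z); apply: ltW.
have sc : \sum_(i : X) c = #|X|%:R * c by rewrite sumr_const mulr_natl.
rewrite /P0 big_split /= sc -mulr_sumr (bigD1 x') //= eqxx.
rewrite big1 ?addr0; last by move=> i /negbTE ->.
rewrite /k /= mulr1; ring.
Qed.

Lemma push_P0 x' y : push K (P0 x') y = c * \sum_x K x y + k * K x' y.
Proof.
rewrite /push /P0.
under eq_bigr do rewrite mulrDr.
rewrite big_split /= mulr_sumr; congr (_ + _).
  by apply: eq_bigr => i _; rewrite mulrC.
rewrite (bigD1 x') //= eqxx big1 ?addr0; first by rewrite mulr1 mulrC.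
by move=> i /negbTE ->; rewrite mulr0 mulr0.
Qed.

Lemma Hconstr x' z y : K z y <= e * (c * \sum_x K x y + k * K x' y).
Proof. by rewrite -push_P0; apply: keyB; apply: P0_Qc. Qed.

Lemma pairwise (a : pred Y) x x' :
  \sum_(y | a y) K x y - \sum_(y | a y) K x' y <= Xi X eps c.
Proof.
have hG z : \sum_(y | a y) K z y + \sum_(y | ~~ a y) K z y = 1.
  by rewrite -(K_sum1 z) [in RHS](bigID a).
have hS : \sum_(y | a y) (\sum_x K x y) + \sum_(y | ~~ a y) (\sum_x K x y) = #|X|%:R.
  transitivity (\sum_y \sum_x K x y); first by rewrite [in RHS](bigID a).
  rewrite exchange_big /=.
  under eq_bigr do rewrite K_sum1.
  by rewrite sumr_const.
have h1 : \sum_(y | a y) K x y <= \sum_(y | a y) e * (c * \sum_x K x y + k * K x' y).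
  by apply: ler_sum => y _; apply: Hconstr.
have h2 : \sum_(y | ~~ a y) K x' y <= \sum_(y | ~~ a y) e * (c * \sum_x K x y + k * K x y).
  by apply: ler_sum => y _; apply: Hconstr.
rewrite -mulr_sumr big_split /= -!mulr_sumr in h1.
rewrite -mulr_sumr big_split /= -!mulr_sumr in h2.
move: h1 h2 (hG x) (hG x') hS.
set Gx := \sum_(y | a y) K x y.
set Gx' := \sum_(y | a y) K x' y.
set Hx := \sum_(y | ~~ a y) K x y.
set Hx' := \sum_(y | ~~ a y) K x' y.
set SA := \sum_(y | a y) _.
set SB := \sum_(y | ~~ a y) _.
move=> h1 h2 e1 e2 e3.
have Hx0 : 0 <= Hx by apply: sumr_ge0 => y _; apply: K_ge0.
have Gx0 : 0 <= Gx' by apply: sumr_ge0 => y _; apply: K_ge0.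
clearbody Gx Gx' Hx Hx' SA SB.
have e0 : 1 <= e by rewrite /e -expR0 ler_expR.
have hk := k_ge0.
have H2 : Gx - Gx' <= 1 by lra.
have den : 0 < e * k + 1.
  have : 0 <= e * k by apply: mulr_ge0; lra.
  lra.
have H1 : Gx - Gx' <= (e - 1) / (e * k + 1).
  rewrite ler_pdivlMr //.
  have : Gx + Hx' <= e * c * (SA + SB) + e * k * (Gx' + Hx) by nra.
  rewrite e3.
  have -> : Hx' = 1 - Gx' by lra.
  have -> : Hx = 1 - Gx by lra.
  have ek : e * k = e - e * (#|X|%:R * c) by rewrite /k; ring.
  move=> h; nra.
by rewrite /Xi le_min H1 H2.
Qed.

Hypothesis hX : (0 < #|X|)%N.

Lemma Tbound (P Q : X -> R) : Qc c P -> Qc c Q ->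
  \sum_y pp (push K P y - push K Q y) <= Xi X eps c * TV P Q.
Proof.
move=> hP hQ.
set a := fun y => push K Q y < push K P y.
rewrite (bigID a) /=.
rewrite [X in _ + X]big1 ?addr0; last first.
  by move=> y; rewrite /a -leNgt => h; rewrite pp_neg // subr_le0.
rewrite (eq_bigr (fun y => push K P y - push K Q y)); last first.
  by move=> y; rewrite /a => h; rewrite pp_pos // subr_ge0 ltW.
have -> : \sum_(y | a y) (push K P y - push K Q y) =
    \sum_x (P x - Q x) * \sum_(y | a y) K x y.
  transitivity (\sum_(y | a y) \sum_x (P x - Q x) * K x y).
    by apply: eq_bigr => y _; rewrite /push -sumrB; apply: eq_bigr => x _; ring.
  by rewrite exchange_big /=; apply: eq_bigr => x _; rewrite mulr_sumr.
set G := fun x => \sum_(y | a y) K x y.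
have [x0 _] : exists x0 : X, x0 \in X by apply/card_gt0P.
case: (@arg_minP _ _ _ x0 xpredT G erefl) => m _ hm.
have sd : \sum_x (P x - Q x) = 0.
  by rewrite sumrB; case: hP => [[_ ->] _]; case: hQ => [[_ ->] _]; rewrite subrr.
have -> : \sum_x (P x - Q x) * G x = \sum_x (P x - Q x) * (G x - G m).
  symmetry; rewrite (eq_bigr (fun x => (P x - Q x) * G x - (P x - Q x) * G m)).
    by rewrite sumrB -mulr_suml sd mul0r subr0.
  by move=> x _; rewrite mulrBr.
apply: (@le_trans _ _ (\sum_x pp (P x - Q x) * Xi X eps c)).
  apply: ler_sum => x _.
  have g0 : 0 <= G x - G m by rewrite subr_ge0; apply: hm.
  apply: le_trans (_ : pp (P x - Q x) * (G x - G m) <= _).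
    by apply: ler_wpM2r => //; apply: pp_ge.
  by apply: ler_wpM2l; [apply: pp_ge0 | apply: pairwise].
have hsum : \sum_x pp (P x - Q x) = TV P Q.
  rewrite /pp /TV -mulr_suml big_split /= sd add0r mulrC.
  by [].
by rewrite -mulr_suml mulrC hsum.
Qed.

Lemma sum_push (P : X -> R) : Qc c P -> \sum_y push K P y = 1.
Proof.
move=> [[_ h1] _]; rewrite /push exchange_big /= -h1.
by apply: eq_bigr => x _; rewrite -mulr_suml K_sum1 mul1r.
Qed.

Lemma KL_bound (P Q : X -> R) : Qc c P -> Qc c Q ->
  KL (push K P) (push K Q) <=
    ln (k * e + 1) * \sum_y pp (push K P y - push K Q y).
Proof.
move=> hP hQ.
have hk := k_ge0.
have e0 : 1 <= e by rewrite /e -expR0 ler_expR.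
have ke0 : 0 <= k * e by apply: mulr_ge0 => //; lra.
have r1 y : push K P y <= (k * e + 1) * push K Q y.
  by rewrite [k * e + 1]addrC [k * e]mulrC; apply: ratio.
have r2 y : push K Q y <= (k * e + 1) * push K P y.
  by rewrite [k * e + 1]addrC [k * e]mulrC; apply: ratio.
have g1 y : 0 <= push K P y by apply: push_ge0; case: hP => [[]].
have g2 y : 0 <= push K Q y by apply: push_ge0; case: hQ => [[]].
rewrite /KL big_mkcond /=.
case: (eqVneq (k * e) 0) => [ke|kne].
  rewrite ke add0r ln1 mul0r.
  rewrite big1 // => y _.
  case: eqP => // /eqP hne.
  have E : push K P y = push K Q y.
    by apply/le_anti; move: (r1 y) (r2 y); rewrite ke add0r !mul1r => -> ->.
  by rewrite -E divff ?ln1 ?mulr0.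
have kp : 0 < k * e by rewrite lt_def kne ke0.
have b1 : 1 <= k * e + 1 by lra.
have hs : (k * e + 1 - 1) * \sum_y (if push K P y != 0 then push K P y *
            ln (push K P y / push K Q y) else 0)
    <= \sum_y ((push K P y - push K Q y) * ln (k * e + 1) +
        (k * e + 1 - 1) * ln (k * e + 1) * pp (push K P y - push K Q y)).
  by rewrite mulr_sumr; apply: ler_sum => y _; apply: term.
have eq : \sum_y ((push K P y - push K Q y) * ln (k * e + 1) +
        (k * e + 1 - 1) * ln (k * e + 1) * pp (push K P y - push K Q y))
      = (k * e) * (ln (k * e + 1) * \sum_y pp (push K P y - push K Q y)).
  rewrite big_split /= -mulr_suml -mulr_sumr sumrB !sum_push // subrr mul0r add0r.
  ring.
have ke1 : k * e + 1 - 1 = k * e by ring.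
by rewrite eq ke1 ler_pM2l in hs.
Qed.
End B.

Theorem corollary1 (R : realType) (X Y : finType) (c eps delta : R)
  (K : X -> Y -> R) :
  (2 <= #|X|)%N ->
  0 < c -> c <= (#|X|%:R)^-1 ->
  0 <= eps ->
  in_M eps c K ->
  forall P Q : X -> R, Qc c P -> Qc c Q ->
  TV P Q <= delta ->
  KL (push K P) (push K Q) <=
    Xi X eps c * ln ((1 - #|X|%:R * c) * expR eps + 1) * delta.
Proof.
move=> hN c0 cN eps0 HKm P Q hP hQ hTV.
have hX : (0 < #|X|)%N by apply: leq_trans hN.
have Npos : 0 < #|X|%:R :> R by rewrite ltr0n.
have hcN : #|X|%:R * c <= 1.
  by have := ler_wpM2l (ltW Npos) cN; rewrite mulfV // gt_eqF.
have h1 := @KL_bound R X Y c eps K c0 HKm hcN eps0 P Q hP hQ.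
have h2 := @Tbound R X Y c eps K c0 HKm hcN eps0 hX P Q hP hQ.
have e0 : 1 <= expR eps by rewrite -expR0 ler_expR.
have k0 : 0 <= 1 - #|X|%:R * c by rewrite subr_ge0.
have L0 : 0 <= ln ((1 - #|X|%:R * c) * expR eps + 1).
  by rewrite ln_ge0 // lerDr; apply: mulr_ge0 => //; lra.
have Xi0 : 0 <= Xi X eps c.
  have A0 : 0 <= (expR eps - 1) / (expR eps * (1 - #|X|%:R * c) + 1).
    apply: divr_ge0; first lra.
    have : 0 <= expR eps * (1 - #|X|%:R * c) by apply: mulr_ge0 => //; lra.
    lra.
  by rewrite /Xi le_min A0 ler01.
have TV0 : 0 <= TV P Q.
  rewrite /TV; apply: mulr_ge0; first by rewrite invr_ge0 ler0n.
  by apply: sumr_ge0 => x _; apply: normr_ge0.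
move: h1 h2.
set L := ln _. set T := \sum_y _. set KLv := KL _ _. set Xv := Xi X eps c. set TVv := TV P Q.
move=> h1 h2.
apply: (le_trans h1).
have : L * T <= L * (Xv * TVv) by apply: ler_wpM2l.
have : L * (Xv * TVv) <= L * (Xv * delta).
  by apply: ler_wpM2l => //; apply: ler_wpM2l.
move=> a b; apply: (le_trans b); apply: (le_trans a).
by rewrite mulrA [L * Xv]mulrC.
Qed.
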